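(* Let $w$ be a 2D-weight and $\mathfrak{K}_w$ the 2D-GWN operator associated with $w$. Then for all $k\ge0$, as operators on $\mathcal{S}^*(M)$, $$\mathfrak{K}_w\mathfrak{a}_k^\dagger=\mathfrak{a}_k^\dagger\mathfrak{K}_w-\mathfrak{a}_k^\dagger\mathfrak{N}_{w(k,\cdot)}-\mathfrak{a}_k^\dagger\mathfrak{N}_{w(\cdot,k)}+\Big[\sum_{j=0}^\infty w(j,k)\Big]\mathfrak{a}_k^\dagger,$$ where $\mathfrak{N}_{w(k,\cdot)}$ and $\mathfrak{N}_{w(\cdot,k)}$ are the 1D-GWN operators associated with the bounded nonnegative functions $n\mapsto w(k,n)$ and $j\mapsto w(j,k)$ on $\mathbb{N}$.
   Context: Setting: $M$ a discrete-time normal martingale with the chaotic representation property; $Z_0=M_0$, $Z_n=M_n-M_{n-1}$; $\Gamma$ the finite subsets of $\mathbb{N}$, $Z_\emptyset=1$, $Z_\sigma=\prod_{j\in\sigma}Z_j$, an orthonormal basis of $\mathcal{L}^2(M)$. $\lambda_\emptyset=1$, $\lambda_\sigma=\prod_{k\in\sigma}(k+1)$; $\mathcal{S}(M)=\{\xi\in\mathcal{L}^2(M):\sum_\sigma\lambda_\sigma^{2p}|\langle Z_\sigma,\xi\rangle|^2<\infty\ \forall p\ge0\}$, $\mathcal{S}^*(M)$ its dual with the strong topology. Fock transform $\widehat\Phi(\sigma)=\Phi(Z_\sigma)$ (determines $\Phi$); $\mathbf{1}_\sigma$ is the indicator of $\sigma$. A 2D-weight is a nonnegative $w$ on $\mathbb{N}^2$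 with $\sup_k\sum_jw(j,k)<\infty$ (hence $w$ is bounded); spectral function $\vartheta_w(\sigma)=\sum_j\mathbf{1}_\sigma(j)w(j,j)+\sum_{j,k}(1-\mathbf{1}_\sigma(j))\mathbf{1}_\sigma(k)w(j,k)$. The 2D-GWN operator $\mathfrak{K}_w$ is the unique continuous linear operator on $\mathcal{S}^*(M)$ with $\widehat{\mathfrak{K}_w\Phi}(\sigma)=\vartheta_w(\sigma)\widehat\Phi(\sigma)$. For a bounded nonnegative $u$ on $\mathbb{N}$, the 1D-GWN operator $\mathfrak{N}_u$ is the unique continuous linear operator on $\mathcal{S}^*(M)$ with $\widehat{\mathfrak{N}_u\Phi}(\sigma)=\#_u(\sigma)\widehat\Phi(\sigma)$, $\#_u(\sigma)=\sum_k\mathbf{1}_\sigma(k)u(k)$. For $k\ge0$, $\mathfrak{a}_k,\mathfrak{a}_k^\dagger$ are the continuous linear operators on $\mathcal{S}^*(M)$ determined by $\widehat{\mathfrak{a}_k\Phi}(\sigma)=(1-\mathbf{1}_\sigma(k))\widehat\Phi(\sigma\cup\{k\})$ and $\widehat{\mathfrak{a}_k^\dagger\Phi}(\sigma)=\mathbf{1}_\sigma(k)\widehat\Phi(\sigma\setminus\{k\})$. *)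

(* Defs.v *)
From HB Require Import structures.
From mathcomp Require Import all_boot all_order all_algebra finmap.
From mathcomp Require Import all_classical all_reals all_analysis.
From mathcomp Require Import complex.
Set Implicit Arguments.
Unset Strict Implicit.
Unset Printing Implicit Defensive.
Import Order.TTheory GRing.Theory Num.Theory.
Local Open Scope ring_scope.
Local Open Scope fset_scope.

(* Gamma = finite subsets of N, modelled by {fset nat}.
   A generalized functional Phi in S*(M) is identified with its Fock transform
   hat Phi : Gamma -> C (the Fock transform determines Phi, and every operator
   in the statement is *defined* by its action on Fock transforms). *)

Definition indic (R : realType) (s : {fset nat}) (j : nat) : R := (j \in s)%:R.

Definition lambda (R : realType) (s : {fset nat}) : R := \prod_(k <- s) (k.+1)%:R.

Definition in_Sstar (R : realType) (Phi : {fset nat} -> R[i]) : Prop :=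
  exists p : nat,
    (\esum_(s in [set: {fset nat}])
        (((lambda R s) ^- (2 * p)) * ((complex.Re (Phi s)) ^+ 2 + (complex.Im (Phi s)) ^+ 2))%:E < +oo)%E.

Definition weight2D (R : realType) (w : nat -> nat -> R) : Prop :=
  (forall j k, 0 <= w j k) /\
  exists C : R, forall k n, \sum_(j < n) w j k <= C.

Definition colsum (R : realType) (w : nat -> nat -> R) (k : nat) : R :=
  limn (fun n => \sum_(0 <= j < n) w j k).

(* spectral function theta_w(sigma)
   = sum_j 1_s(j) w(j,j) + sum_{j,k} (1-1_s(j)) 1_s(k) w(j,k);
   the (nonnegative) double series is written as the finite sum over k in sigma
   of the series over j. *)
Definition theta (R : realType) (w : nat -> nat -> R) (s : {fset nat}) : R :=
  \sum_(j <- s) w j j +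
  \sum_(k <- s) limn (fun n => \sum_(0 <= j < n) ((1 - indic R s j) * w j k)).

Definition count_u (R : realType) (u : nat -> R) (s : {fset nat}) : R :=
  \sum_(k <- s) u k.

Definition rc (R : realType) (x : R) : R[i] := real_complex R x.

Definition K2 (R : realType) (w : nat -> nat -> R) (Phi : {fset nat} -> R[i])
  : {fset nat} -> R[i] := fun s => rc (theta w s) * Phi s.

Definition N1 (R : realType) (u : nat -> R) (Phi : {fset nat} -> R[i])
  : {fset nat} -> R[i] := fun s => rc (count_u u s) * Phi s.

Definition ann (R : realType) (k : nat) (Phi : {fset nat} -> R[i])
  : {fset nat} -> R[i] := fun s => rc (1 - indic R s k) * Phi (s `|` [fset k]).

Definition cre (R : realType) (k : nat) (Phi : {fset nat} -> R[i])
  : {fset nat} -> R[i] := fun s => rc (indic R s k) * Phi (s `\ k).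

(* Main.v *)
Require Import Defs.
From HB Require Import structures.
From mathcomp Require Import all_boot all_order all_algebra finmap.
From mathcomp Require Import all_classical all_reals all_analysis.
From mathcomp Require Import complex.
From mathcomp Require Import ring lra.
Import Order.TTheory GRing.Theory Num.Theory.
Import numFieldNormedType.Exports.

Local Open Scope ring_scope.


Local Open Scope classical_set_scope.
Lemma lim_shift (R : realType) (u v : nat -> R) (c : R) :
  cvgn u -> (\forall n \near \oo, v n = u n + c) -> limn v = limn u + c.
Proof.
move=> cu ev.
have h : v @ \oo --> limn u + c.
  have e : v @ \oo `=>` (fun n => u n + c) @ \oo.
    by apply: near_eq_cvg; near=> n; rewrite (near ev n).
  apply: cvg_trans e _.
  by apply: cvgD => //; exact: cvg_cst.
exact: cvg_lim.
Unshelve. all: by end_near. Qed.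

Local Close Scope classical_set_scope.
Lemma sum_indic (R : realType) (A : {fset nat}) (f : nat -> R) n :
  (forall j, j \in A -> (j < n)%N) ->
  \sum_(0 <= j < n) Defs.indic R A j * f j = \sum_(j <- A) f j.
Proof.
move=> hA.
rewrite (eq_bigr (fun j => if j \in A then f j else 0)); last first.
  by move=> j _; rewrite /Defs.indic; case: (j \in A); rewrite ?mul1r ?mul0r.
rewrite -big_mkcond -big_filter; apply: perm_big.
apply: uniq_perm; first by rewrite filter_uniq // iota_uniq.
  exact: fset_uniq.
move=> j; rewrite mem_filter mem_iota /=; apply/andP/idP => [[]//|jA].
split => //; move: (hA j jA); rewrite ?add0n ?subn0 //=.
Qed.

Lemma indic01 (R : realType) (A : {fset nat}) j : 0 <= 1 - Defs.indic R A j <= 1.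
Proof. by rewrite /Defs.indic; case: (j \in A) => /=; rewrite ?subrr ?subr0 ?lexx ?ler01. Qed.

Lemma S_cvg (R : realType) (w : nat -> nat -> R) (A : {fset nat}) m :
  weight2D w -> cvgn (fun n => \sum_(0 <= j < n) ((1 - Defs.indic R A j) * w j m)).
Proof.
move=> [w0 [C hC]]; apply: nondecreasing_is_cvgn.
  apply: nondecreasing_series => n _ _.
  by apply: mulr_ge0; [case/andP: (indic01 R A n)|].
exists C => _ [n _ <-].
apply: (le_trans _ (hC m n)); rewrite big_mkord; apply: ler_sum => j _.
case/andP: (indic01 R A j) => h0 h1.
by rewrite -[X in _ <= X]mul1r ler_wpM2r.
Qed.

Lemma ev_ge (P : nat -> Prop) N : (forall n, (N <= n)%N -> P n) -> \forall n \near \oo%classic, P n.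
Proof. by move=> h; near=> n; apply: h; near: n; exact: nbhs_infty_ge.
Unshelve. all: by end_near. Qed.

Lemma F1 (R : realType) (w : nat -> nat -> R) (A : {fset nat}) m :
  weight2D w ->
  limn (fun n => \sum_(0 <= j < n) w j m) =
  limn (fun n => \sum_(0 <= j < n) ((1 - Defs.indic R A j) * w j m)) + \sum_(j <- A) w j m.
Proof.
move=> hw; apply: lim_shift; first exact: S_cvg.
apply: (@ev_ge _ (\max_(j <- A) j).+1) => n hn.
rewrite -(@sum_indic R A _ n); last first.
  move=> j jA; apply: leq_ltn_trans hn.
  exact: (@leq_bigmax_seq _ _ xpredT id).
rewrite -big_split /=; apply: eq_bigr => j _; ring.
Qed.

Lemma F2 (R : realType) (w : nat -> nat -> R) (t : {fset nat}) k m :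
  weight2D w -> k \notin t ->
  limn (fun n => \sum_(0 <= j < n) ((1 - Defs.indic R t j) * w j m)) =
  limn (fun n => \sum_(0 <= j < n) ((1 - Defs.indic R (k |` t)%fset j) * w j m)) + w k m.
Proof.
move=> hw kt; apply: lim_shift; first exact: S_cvg.
apply: (@ev_ge _ k.+1) => n hn.
have -> : w k m = \sum_(j <- [fset k]%fset) w j m by rewrite big_seq_fset1.
rewrite -(@sum_indic R [fset k]%fset _ n); last by move=> j; rewrite inE => /eqP ->.
rewrite -big_split /=; apply: eq_bigr => j _.
rewrite /Defs.indic in_fset1U inE.
case: (eqVneq j k) => [->|_] /=; last by rewrite mul0r addr0.
by move: kt; case: (_ \in t) => //= _; rewrite subr0 subrr mul0r add0r.
Qed.

Theorem theorem3p16 (R : realType) (w : nat -> nat -> R) :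
  weight2D w ->
  forall k : nat, forall Phi : {fset nat} -> R[i], in_Sstar Phi ->
  forall s : {fset nat},
    K2 w (cre k Phi) s =
      cre k (K2 w Phi) s
      - cre k (N1 (fun n => w k n) Phi) s
      - cre k (N1 (fun j => w j k) Phi) s
      + rc (colsum w k) * cre k Phi s.
Proof.
move=> hw k Phi _ s.
rewrite /K2 /N1 /cre /Defs.indic.
case: (boolP (k \in s)) => ks /=; last first.
  by rewrite /rc !rmorph0 !mul0r !mulr0 subrr subr0 addr0.
set t := (s `\ k)%fset.
have hs : s = (k |` t)%fset by rewrite fsetD1K.
have kt : k \notin t by rewrite fsetD11.
suff -> : theta w s = theta w t - count_u (fun n => w k n) t
     - count_u (fun j => w j k) t + colsum w k.
  rewrite /rc !rmorph1 !mul1r !rmorphD !rmorphN /=; ring.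
rewrite /theta /count_u /colsum.
rewrite (@F1 R w s k hw) {1 2}hs !big_fsetU1 //=.
have -> : \sum_(m <- t) limn (fun n => \sum_(0 <= j < n) ((1 - Defs.indic R t j) * w j m)) =
   \sum_(m <- t) limn (fun n => \sum_(0 <= j < n) ((1 - Defs.indic R s j) * w j m)) + \sum_(m <- t) w k m.
  rewrite -big_split /=; apply: eq_bigr => m _; rewrite hs; exact: F2.
have e : \sum_(j <- s) w j k = w k k + \sum_(j <- t) w j k by rewrite {1}hs big_fsetU1.
rewrite e; ring.
Qed.
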